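(* Let $\Gamma$ be a group and $\alpha\in\mathrm{Aut}(\Gamma)$. The centre $Z(G(\alpha))$ consists exactly of the elements of $K(\alpha)$ which, viewed as maps $\mathbb Q_2\to\Gamma$, are constant with value in $Z\Gamma\cap\Gamma^\alpha$.
   Context: $\{0,1\}^*$ denotes the finite words over $\{0,1\}$ (including the empty word), $|u|$ the length; $\mathfrak C=\{0,1\}^{\mathbb N}$; $\mathbb Q_2\subset\mathfrak C$ the eventually-zero sequences $u00\cdots$. A finite complete prefix code is a finite set $\{t_1,\dots,t_n\}\subset\{0,1\}^*$ such that every $x\in\mathfrak C$ has exactly one $t_i$ as prefix. Thompson's group $V$ is the group of homeomorphisms $v$ of $\mathfrak C$ for which there exist finite complete prefix codes $\{t_i\},\{s_i\}$ and a permutation $\sigma$ with $v(t_iw)=s_{\sigma(i)}w$. $K(\alpha)$ is the group of maps $a:\{0,1\}^*\to\Gamma$ (pointwise product) with $a(u)=\alpha(a(u0))$ for all $u$; $V$ acts on it by $\pi(v)(a)(s_{\sigma(i)}u)=a(t_iu)$ for all $i$, $u\in\{0,1\}^*$ (determining $\pi(v)(a)$ uniquely); $G(\alpha):=K(\alpha)\rtimes V$ with $vav^{-1}=\pi(v)(a)$. An element $a\in K(\alpha)$ is viewed as the map $\mathbb Q_2\to\Gamma$, $x\mapsto\alpha^{|u|}(a(u))$ where $x=u00\cdots$ (well defined, giving an isomorphism $K(\alpha)\cong\prod_{\mathbb Q_2}\Gamma$). $\Gamma^\alpha$ is the set of fixed points of $\alpha$ and $Z\Gamma$ the centre of $\Gamma$.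 *)

(* Defs.v *)
From Stdlib Require Import List Arith Lia ClassicalEpsilon.
Import ListNotations.
Set Implicit Arguments.

Record group := Group {
  carrier :> Type;
  gmul : carrier -> carrier -> carrier;
  gone : carrier;
  ginv : carrier -> carrier;
  gmulA : forall x y z, gmul x (gmul y z) = gmul (gmul x y) z;
  gmul1 : forall x, gmul gone x = x;
  gmulV : forall x, gmul (ginv x) x = gone
}.

Record aut (G : group) := Aut {
  amap :> G -> G;
  amap_mul : forall x y, amap (gmul G x y) = gmul G (amap x) (amap y);
  amap_inj : forall x y, amap x = amap y -> x = y;
  amap_surj : forall y, exists x, amap x = y
}.

Definition in_centre (G : group) (z : G) : Prop := forall y : G, gmul G z y = gmul G y z.
Definition fixed (G : group) (al : aut G) (z : G) : Prop := al z = z.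

Definition word := list bool.
Definition cantor := nat -> bool.

Definition cat (u : word) (x : cantor) : cantor :=
  fun n => if n <? length u then nth n u false else x (n - length u).

Definition is_prefix (u : word) (x : cantor) : Prop :=
  forall n, n < length u -> nth n u false = x n.

Definition complete_prefix_code (T : list word) : Prop :=
  NoDup T /\ forall x : cantor, exists! t, In t T /\ is_prefix t x.

Definition V_rep (v : cantor -> cantor) (t s : list word) (sigma : nat -> nat) : Prop :=
  complete_prefix_code t /\ complete_prefix_code s /\ length t = length s /\
  (forall i, i < length t -> sigma i < length t) /\
  (forall i j, i < length t -> j < length t -> sigma i = sigma j -> i = j) /\
  (forall i (w : cantor), i < length t ->
     v (cat (nth i t []) w) = cat (nth (sigma i) s []) w).

Definition inV (v : cantor -> cantor) : Prop := exists t s sigma, V_rep v t s sigma.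

Definition inK (G : group) (al : aut G) (a : word -> G) : Prop :=
  forall u, a u = al (a (u ++ [false])).

Definition pi_spec (G : group) (al : aut G) (v : cantor -> cantor) (a b : word -> G) : Prop :=
  inK al b /\
  forall t s sigma, V_rep v t s sigma ->
    forall i (u : word), i < length t ->
      b (nth (sigma i) s [] ++ u) = a (nth i t [] ++ u).

Definition pi (G : group) (al : aut G) (v : cantor -> cantor) (a : word -> G) : word -> G :=
  epsilon (inhabits (fun _ : word => gone G)) (pi_spec al v a).

Definition Gelt (G : group) : Type := ((word -> G) * (cantor -> cantor))%type.

Definition inG (G : group) (al : aut G) (g : Gelt G) : Prop := inK al (fst g) /\ inV (snd g).

(* (a,v)(b,w) = (a * v b v^-1, v w) = (a * pi(v)(b), v o w) *)
Definition Gmul (G : group) (al : aut G) (g h : Gelt G) : Gelt G :=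
  (fun u => gmul G (fst g u) (pi al (snd g) (fst h) u),
   fun x => snd g (snd h x)).

Definition central (G : group) (al : aut G) (g : Gelt G) : Prop :=
  inG al g /\ forall h, inG al h -> Gmul al g h = Gmul al h g.

Definition zeros : cantor := fun _ => false.
Definition inQ2 (x : cantor) : Prop := exists u : word, x = cat u zeros.

Fixpoint iter_aut (G : group) (al : aut G) (n : nat) (y : G) : G :=
  match n with O => y | S k => al (iter_aut al k y) end.

Definition Kval (G : group) (al : aut G) (a : word -> G) (x : cantor) : G :=
  epsilon (inhabits (gone G))
    (fun g => exists u : word, x = cat u zeros /\ g = iter_aut al (length u) (a u)).

(* Main.v *)
Require Import Defs.
From Stdlib Require Import List Arith Lia FinFun FunctionalExtensionality ClassicalEpsilon Classical.
Import ListNotations.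

Section Grp.
Variable G : group.
Lemma idem0 (y : G) : gmul G y y = y -> y = gone G.
Proof.
  intro E.
  assert (H : gmul G (ginv G y) (gmul G y y) = gmul G (ginv G y) y) by (rewrite E; reflexivity).
  rewrite gmulA, gmulV, gmul1 in H. exact H.
Qed.
Lemma gmulVr (x : G) : gmul G x (ginv G x) = gone G.
Proof.
  apply idem0. rewrite <- gmulA. rewrite (gmulA _ (ginv G x) x).
  rewrite gmulV, gmul1. reflexivity.
Qed.
Lemma gmul1r (x : G) : gmul G x (gone G) = x.
Proof. rewrite <- (gmulV _ x), gmulA, gmulVr, gmul1. reflexivity. Qed.
Lemma gcancel (x y z : G) : gmul G x y = gmul G x z -> y = z.
Proof.
  intro H. rewrite <- (gmul1 _ y), <- (gmul1 _ z), <- (gmulV _ x), <- !gmulA, H.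
  reflexivity.
Qed.
Lemma idem1 (x : G) : gmul G x x = x -> x = gone G.
Proof. apply idem0. Qed.
End Grp.

Lemma al1 (G : group) (al : aut G) : al (gone G) = gone G.
Proof. apply idem1. rewrite <- amap_mul, gmul1. reflexivity. Qed.

Lemma iter_add (G : group) (al : aut G) m n y :
  iter_aut al (m + n) y = iter_aut al m (iter_aut al n y).
Proof. induction m; simpl; congruence. Qed.

Lemma iter_inj (G : group) (al : aut G) n x y :
  iter_aut al n x = iter_aut al n y -> x = y.
Proof. induction n; simpl; auto. intro H. apply IHn, (amap_inj al), H. Qed.

Lemma iter_fixed (G : group) (al : aut G) n z : al z = z -> iter_aut al n z = z.
Proof. intro H; induction n; simpl; congruence. Qed.

Lemma K_pad (G : group) (al : aut G) a : inK al a ->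
  forall k p, a p = iter_aut al k (a (p ++ repeat false k)).
Proof.
  intros HK k; induction k; intro p; simpl.
  - rewrite app_nil_r; reflexivity.
  - rewrite HK, (IHk (p ++ [false])), <- app_assoc. reflexivity.
Qed.

Definition ccons (b : bool) (x : cantor) : cantor :=
  fun n => match n with 0 => b | S m => x m end.
Definition ctl (x : cantor) : cantor := fun n => x (S n).

Lemma ccons_eta x : ccons (x 0) (ctl x) = x.
Proof. apply functional_extensionality; intros [|n]; reflexivity. Qed.

Lemma cat_nil w : cat [] w = w.
Proof. apply functional_extensionality; intro n. unfold cat; simpl.
  rewrite Nat.sub_0_r; reflexivity. Qed.

Lemma cat_cons b u w : cat (b :: u) w = ccons b (cat u w).
Proof. apply functional_extensionality; intros [|n]; unfold cat; simpl; reflexivity. Qed.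

Lemma cat_app u1 u2 w : cat (u1 ++ u2) w = cat u1 (cat u2 w).
Proof. induction u1; simpl. rewrite cat_nil; auto. rewrite !cat_cons, IHu1; auto. Qed.

Lemma cat_inj u1 u2 : (forall y, cat u1 y = cat u2 y) -> u1 = u2.
Proof.
  revert u2; induction u1 as [|b u1 IH]; intros [|c u2] H; auto.
  - specialize (H (ccons (negb c) zeros)). rewrite cat_nil, cat_cons in H.
    apply (f_equal (fun f => f 0)) in H. destruct c; discriminate.
  - specialize (H (ccons (negb b) zeros)). rewrite cat_nil, cat_cons in H.
    apply (f_equal (fun f => f 0)) in H. destruct b; discriminate.
  - assert (b = c).
    { specialize (H zeros). rewrite !cat_cons in H. apply (f_equal (fun f => f 0)) in H. exact H. }
    subst. f_equal. apply IH. intro y. specialize (H y). rewrite !cat_cons in H.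
    apply (f_equal ctl) in H. exact H.
Qed.

Lemma cat_inj_len u1 u2 y : length u1 = length u2 -> cat u1 y = cat u2 y -> u1 = u2.
Proof.
  revert u2; induction u1 as [|b u1 IH]; intros [|c u2] L H; simpl in L; try discriminate; auto.
  rewrite !cat_cons in H.
  assert (b = c) by (apply (f_equal (fun f => f 0)) in H; exact H). subst.
  f_equal. apply IH. lia. apply (f_equal ctl) in H. exact H.
Qed.

Lemma cat_zeros_pad u d : cat (u ++ repeat false d) zeros = cat u zeros.
Proof.
  rewrite cat_app. f_equal. induction d; simpl. apply cat_nil.
  rewrite cat_cons, IHd. apply functional_extensionality; intros [|n]; reflexivity.
Qed.

Lemma is_prefix_cons b t x : is_prefix (b :: t) x <-> b = x 0 /\ is_prefix t (ctl x).
Proof.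
  unfold is_prefix; split.
  - intro H. split. apply (H 0); simpl; lia. intros n Hn. apply (H (S n)); simpl; lia.
  - intros [H1 H2] [|n] Hn; simpl; auto. apply H2; simpl in Hn; lia.
Qed.

Lemma is_prefix_nil x : is_prefix [] x.
Proof. intros n Hn; simpl in Hn; lia. Qed.

Lemma prefix_word t P : is_prefix t (cat P zeros) -> length t <= length P ->
  exists r, P = t ++ r.
Proof.
  revert P; induction t as [|b t IH]; intros P H L. exists P; auto.
  destruct P as [|c P]; simpl in L; [lia|].
  rewrite cat_cons in H. apply is_prefix_cons in H as [H1 H2]. simpl in H1; subst.
  destruct (IH P H2) as [r Hr]. lia. exists r; subst; auto.
Qed.

Lemma is_prefix_cat t w : is_prefix t (cat t w).
Proof. induction t. apply is_prefix_nil. rewrite cat_cons. apply is_prefix_cons; split; auto. Qed.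

Lemma code_pad T u : complete_prefix_code T ->
  exists m k r, m < length T /\ u ++ repeat false k = nth m T [] ++ r.
Proof.
  intros [_ HT]. destruct (HT (cat u zeros)) as [t [[Hin Hp] _]].
  destruct (In_nth _ _ [] Hin) as [m [Hm Hnth]].
  exists m, (length t).
  rewrite <- (cat_zeros_pad u (length t)) in Hp.
  destruct (prefix_word _ _ Hp) as [r Hr]. rewrite length_app, repeat_length; lia.
  exists r. subst t. split; auto.
Qed.
Lemma pi_spec_intro (G : group) (al : aut G) v a b t' s' sg' :
  inK al a -> inK al b -> V_rep v t' s' sg' ->
  (forall j u, j < length t' -> b (nth (sg' j) s' [] ++ u) = a (nth j t' [] ++ u)) ->
  pi_spec al v a b.
Proof.
  intros Ha Hb Hr' H. split; auto. intros t s sg Hr i u Hi.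
  destruct Hr' as [Ct' [Cs' [Lt' [Bd' [Inj' Eq']]]]].
  destruct Hr as [Ct [Cs [Lt [Bd [Inj Eq]]]]].
  destruct (code_pad t' (nth i t [] ++ u) Ct') as [j [k [r [Hj Hp]]]].
  rewrite (K_pad _ _ a Ha k (nth i t [] ++ u)), Hp, <- (H j r Hj).
  rewrite (K_pad _ _ b Hb k (nth (sg i) s [] ++ u)). f_equal. f_equal.
  apply cat_inj; intro y.
  rewrite <- app_assoc, cat_app, <- (Eq i _ Hi), <- cat_app, app_assoc, Hp, cat_app, (Eq' j _ Hj), <- cat_app.
  reflexivity.
Qed.

Lemma pi_eq (G : group) (al : aut G) v a b t' s' sg' :
  inK al a -> inK al b -> V_rep v t' s' sg' ->
  (forall j u, j < length t' -> b (nth (sg' j) s' [] ++ u) = a (nth j t' [] ++ u)) ->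
  forall j u, j < length t' -> pi al v a (nth (sg' j) s' [] ++ u) = a (nth j t' [] ++ u).
Proof.
  intros Ha Hb Hr H. assert (S : pi_spec al v a (pi al v a)).
  { unfold pi. apply epsilon_spec. exists b. eapply pi_spec_intro; eauto. }
  destruct S as [_ S]. apply S; auto.
Qed.

Lemma pi_inK (G : group) (al : aut G) v a b t' s' sg' :
  inK al a -> inK al b -> V_rep v t' s' sg' ->
  (forall j u, j < length t' -> b (nth (sg' j) s' [] ++ u) = a (nth j t' [] ++ u)) ->
  inK al (pi al v a).
Proof.
  intros Ha Hb Hr H. assert (S : pi_spec al v a (pi al v a)).
  { unfold pi. apply epsilon_spec. exists b. eapply pi_spec_intro; eauto. }
  apply S.
Qed.

Lemma cpc_single : complete_prefix_code [[]].
Proof.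
  split. constructor. simpl; tauto. constructor.
  intro x. exists []. split. split. simpl; auto. apply is_prefix_nil.
  intros t [Hin _]. destruct Hin as [H|[]]; auto.
Qed.

Lemma rep_id : V_rep (fun x => x) [[]] [[]] (fun i => i).
Proof.
  split. apply cpc_single. split. apply cpc_single. split. auto.
  split. auto. split. auto. intros i w Hi. simpl in Hi. destruct i; [|lia]. reflexivity.
Qed.

Lemma inV_id : inV (fun x => x).
Proof. exists [[]], [[]], (fun i => i). apply rep_id. Qed.

Lemma pi_id (G : group) (al : aut G) b : inK al b -> forall u, pi al (fun x => x) b u = b u.
Proof.
  intros Hb u.
  assert (S : pi_spec al (fun x => x) b (pi al (fun x => x) b)).
  { unfold pi. apply epsilon_spec. exists b. split; auto.
    intros t s sg [Ct [Cs [Lt [Bd [Inj Eq]]]]] i u' Hi.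
    f_equal. f_equal. symmetry. apply cat_inj. intro y. apply (Eq i y Hi). }
  destruct S as [_ S]. apply (S _ _ _ rep_id 0 u). simpl; lia.
Qed.

Lemma pi_const (G : group) (al : aut G) w z : al z = z -> inV w ->
  forall u, pi al w (fun _ => z) u = z.
Proof.
  intros Hz [t [s [sg Hr]]] u.
  assert (S : pi_spec al w (fun _ => z) (pi al w (fun _ => z))).
  { unfold pi. apply epsilon_spec. exists (fun _ => z). split.
    intro; auto. intros; auto. }
  destruct S as [HK S].
  pose proof Hr as [Ct [Cs [Lt [Bd [Inj Eq]]]]].
  destruct (code_pad s u Cs) as [m [k [r [Hm Hp]]]].
  rewrite (K_pad _ _ _ HK k u), Hp.
  assert (Sur : bSurjective (length t) sg).
  { apply bInjective_bSurjective. exact Bd. exact Inj. }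
  destruct (Sur m) as [i [Hi Hsi]]. lia.
  rewrite <- Hsi, (S _ _ _ Hr i r Hi). apply iter_fixed; auto.
Qed.
Lemma cpc_join T0 T1 : complete_prefix_code T0 -> complete_prefix_code T1 ->
  complete_prefix_code (map (cons false) T0 ++ map (cons true) T1).
Proof.
  intros [N0 C0] [N1 C1]. split.
  - apply NoDup_app; try (apply Injective_map_NoDup; auto; intros ? ? H; injection H; auto).
    intros a Ha Hb. apply in_map_iff in Ha as [x [<- _]]. apply in_map_iff in Hb as [y [H _]].
    discriminate.
  - intro x. case_eq (x 0); intro Hx0.
    + destruct (C1 (ctl x)) as [t [[Hin Hp] U]]. exists (true :: t). split.
      * split. apply in_or_app; right; apply in_map; auto. apply is_prefix_cons; auto.
      * intros t' [Hin' Hp']. apply in_app_or in Hin' as [H|H];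
        apply in_map_iff in H as [y [<- Hy]]; apply is_prefix_cons in Hp' as [E Hp'].
        congruence. f_equal. apply U; auto.
    + destruct (C0 (ctl x)) as [t [[Hin Hp] U]]. exists (false :: t). split.
      * split. apply in_or_app; left; apply in_map; auto. apply is_prefix_cons; auto.
      * intros t' [Hin' Hp']. apply in_app_or in Hin' as [H|H];
        apply in_map_iff in H as [y [<- Hy]]; apply is_prefix_cons in Hp' as [E Hp'].
        f_equal. apply U; auto. congruence.
Qed.

Definition join (v0 v1 : cantor -> cantor) (x : cantor) : cantor :=
  if x 0 then ccons true (v1 (ctl x)) else ccons false (v0 (ctl x)).

Definition sjoin (n0 : nat) (s0 s1 : nat -> nat) (i : nat) : nat :=
  if i <? n0 then s0 i else n0 + s1 (i - n0).

Lemma nth_app_l {A} (l1 l2 : list A) i d : i < length l1 -> nth i (l1 ++ l2) d = nth i l1 d.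
Proof. apply app_nth1. Qed.
Lemma nth_app_r {A} (l1 l2 : list A) i d : length l1 <= i -> nth i (l1 ++ l2) d = nth (i - length l1) l2 d.
Proof. apply app_nth2. Qed.

Lemma nth_map_cons b (l : list (list bool)) i : i < length l -> nth i (map (cons b) l) [] = b :: nth i l [].
Proof.
  intro H. rewrite (nth_indep _ _ [b]). rewrite (map_nth (cons b) l []). reflexivity.
  rewrite length_map; auto.
Qed.

Lemma join_rep v0 t0 s0 sg0 v1 t1 s1 sg1 :
  V_rep v0 t0 s0 sg0 -> V_rep v1 t1 s1 sg1 ->
  V_rep (join v0 v1) (map (cons false) t0 ++ map (cons true) t1)
        (map (cons false) s0 ++ map (cons true) s1) (sjoin (length t0) sg0 sg1).
Proof.
  intros [Ct0 [Cs0 [L0 [B0 [I0 E0]]]]] [Ct1 [Cs1 [L1 [B1 [I1 E1]]]]].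
  unfold sjoin. unfold word in *.
  split. apply cpc_join; auto. split. apply cpc_join; auto. split. rewrite !length_app, !length_map; lia.
  rewrite !length_app, !length_map.
  split. { intros i Hi. destruct (Nat.ltb_spec i (length t0)). specialize (B0 i); lia.
           specialize (B1 (i - length t0)); lia. }
  split. { intros i j Hi Hj. destruct (Nat.ltb_spec i (length t0)), (Nat.ltb_spec j (length t0)).
    apply I0; auto. specialize (B0 i); lia. specialize (B0 j); lia.
    intro Hij. assert (i - length t0 = j - length t0). apply I1; lia. lia. }
  intros i w Hi. destruct (Nat.ltb_spec i (length t0)) as [Hlt|Hge].
  - specialize (B0 i Hlt).
    rewrite nth_app_l, nth_map_cons, nth_app_l, nth_map_cons by (try rewrite length_map; lia).
    rewrite !cat_cons. unfold join. simpl. rewrite <- E0 by auto. reflexivity.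
  - assert (Hb1 : sg1 (i - length t0) < length t1) by (apply B1; lia).
    rewrite nth_app_r, nth_map_cons, nth_app_r, nth_map_cons by (try rewrite length_map; lia).
    rewrite !length_map, <- L0. replace (length t0 + sg1 (i - length t0) - length t0) with (sg1 (i - length t0)) by lia.
    rewrite !cat_cons. unfold join. simpl. rewrite <- E1 by lia. reflexivity.
Qed.

Lemma join_inV v0 v1 : inV v0 -> inV v1 -> inV (join v0 v1).
Proof.
  intros [t0 [s0 [sg0 H0]]] [t1 [s1 [sg1 H1]]].
  eexists; eexists; eexists. apply join_rep; eauto.
Qed.

Definition code2 : list word := [[false]; [true]].
Lemma cpc2 : complete_prefix_code code2.
Proof. exact (cpc_join _ _ cpc_single cpc_single). Qed.

Definition sw (x : cantor) : cantor := ccons (negb (x 0)) (ctl x).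

Lemma rep_sw : V_rep sw code2 code2 (fun i => 1 - i).
Proof.
  split. apply cpc2. split. apply cpc2. split. auto.
  split. intros [|[|i]] Hi; unfold code2 in *; simpl in *; lia.
  split. intros [|[|i]] [|[|j]] Hi Hj; unfold code2 in *; simpl in *; lia.
  intros [|[|i]] w Hi; unfold code2 in *; simpl in Hi; try lia; cbn [nth Nat.sub]; rewrite !cat_cons; reflexivity.
Qed.

Fixpoint wq (q : word) : cantor -> cantor :=
  match q with
  | [] => sw
  | b :: q' => if b then join (fun x => x) (wq q') else join (wq q') (fun x => x)
  end.

Lemma inV_wq q : inV (wq q).
Proof.
  induction q as [|b q IH]; simpl.
  - exists code2, code2, (fun i => 1 - i). apply rep_sw.
  - destruct b; apply join_inV; auto; apply inV_id.
Qed.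

Lemma eq_by_eta (y : cantor) b X : y 0 = b -> X = ctl y -> ccons b X = y.
Proof. intros H1 H2; subst; apply ccons_eta. Qed.

Lemma wq_out q y : ~ is_prefix q y -> wq q y = y.
Proof.
  revert y; induction q as [|b q IH]; intros y H; simpl.
  - exfalso; apply H, is_prefix_nil.
  - rewrite is_prefix_cons in H.
    destruct b; unfold join; case_eq (y 0); intro Hy; apply eq_by_eta; auto;
      apply IH; intro Hp; apply H; split; try congruence; auto.
Qed.

Lemma wq_in q y : is_prefix q y -> wq q y (length q) = negb (y (length q)).
Proof.
  revert y; induction q as [|b q IH]; intros y H; simpl.
  - reflexivity.
  - rewrite is_prefix_cons in H. destruct H as [Hb H].
    destruct b; unfold join; rewrite <- Hb; simpl; apply IH; auto.
Qed.
Definition x0f (x : cantor) : cantor :=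
  if x 0 then (if x 1 then ccons true (ctl (ctl x)) else ccons false (ccons true (ctl (ctl x))))
  else ccons false (ccons false (ctl x)).

Definition tx0 : list word := map (cons false) [[]] ++ map (cons true) code2.
Definition sx0 : list word := map (cons false) code2 ++ map (cons true) [[]].

Lemma rep_x0 : V_rep x0f tx0 sx0 (fun i => i).
Proof.
  split. apply cpc_join; [apply cpc_single|apply cpc2].
  split. apply cpc_join; [apply cpc2|apply cpc_single].
  split. reflexivity. split. auto. split. auto.
  intros [|[|[|i]]] w Hi; unfold tx0, code2 in Hi; simpl in Hi; try lia;
    unfold tx0, sx0, code2; cbn [nth map app]; rewrite !cat_cons; reflexivity.
Qed.

Lemma inV_x0 : inV x0f.
Proof. exists tx0, sx0, (fun i => i). apply rep_x0. Qed.

Definition t0w : list word := map (cons false) code2 ++ map (cons true) [[]].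
Lemma rep_w0 : V_rep (wq [false]) t0w t0w (sjoin 2 (fun i => 1 - i) (fun i => i)).
Proof. exact (join_rep _ _ _ _ _ _ _ _ rep_sw rep_id). Qed.

Section Bs.
Variable G : group.
Variable al : aut G.
Variable a : word -> G.
Hypothesis Ha : inK al a.

Definition bsw (u : word) : G :=
  match u with [] => al (a [true]) | false :: u' => a (true :: u') | true :: u' => a (false :: u') end.
Definition bw0 (u : word) : G :=
  match u with
  | [] => al (al (a [false; true]))
  | [false] => al (a [false; true])
  | false :: false :: u' => a (false :: true :: u')
  | false :: true :: u' => a (false :: false :: u')
  | true :: u' => a (true :: u')
  end.
Definition bx0 (u : word) : G :=
  match u with
  | [] => al (al (a [false]))
  | [false] => al (a [false])
  | false :: false :: u' => a (false :: u')
  | false :: true :: u' => a (true :: false :: u')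
  | true :: u' => a (true :: true :: u')
  end.

Lemma bsw_K : inK al bsw.
Proof. intros [|[] u]; simpl; first [reflexivity | apply Ha]. Qed.
Lemma bw0_K : inK al bw0.
Proof. intros [|[] [|[] u]]; simpl; first [reflexivity | apply Ha]. Qed.
Lemma bx0_K : inK al bx0.
Proof. intros [|[] [|[] u]]; simpl; first [reflexivity | apply Ha]. Qed.

Lemma pi_sw u : pi al sw a (true :: u) = a (false :: u).
Proof.
  exact (pi_eq G al sw a bsw code2 code2 (fun i => 1 - i) Ha bsw_K rep_sw
    ltac:(intros [|[|j]] u' Hj; unfold code2 in *; simpl in *; try lia; reflexivity) 0 u ltac:(simpl; lia)).
Qed.
Lemma pi_w0 u : pi al (wq [false]) a (false :: true :: u) = a (false :: false :: u).
Proof.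
  exact (pi_eq G al (wq [false]) a bw0 t0w t0w _ Ha bw0_K rep_w0
    ltac:(intros [|[|[|j]]] u' Hj; unfold t0w, code2 in *; simpl in *; try lia; reflexivity) 0 u ltac:(simpl; lia)).
Qed.
Lemma pi_x0 u : pi al x0f a (false :: false :: u) = a (false :: u).
Proof.
  exact (pi_eq G al x0f a bx0 tx0 sx0 _ Ha bx0_K rep_x0
    ltac:(intros [|[|[|j]]] u' Hj; unfold tx0, sx0, code2 in *; simpl in *; try lia; reflexivity) 0 u ltac:(simpl; lia)).
Qed.

Lemma const_from_rel :
  (forall u, a (false :: false :: u) = a (false :: u)) ->
  (forall u, a (true :: u) = a (false :: u)) ->
  (forall u, a (false :: true :: u) = a (false :: false :: u)) ->
  (forall u, a u = a [false]) /\ al (a [false]) = a [false].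
Proof.
  intros R1 R2 R3.
  assert (C1 : forall u, a (false :: u) = a [false]).
  { induction u as [|b u IH]; auto. destruct b. rewrite R3, R1; auto. rewrite R1; auto. }
  assert (F : al (a [false]) = a [false]).
  { pose proof (Ha [false]) as E. simpl in E. rewrite (C1 [false]) in E. symmetry; exact E. }
  split; auto. intros [|[] u]; auto.
  rewrite Ha. simpl. exact F. rewrite R2; auto.
Qed.
End Bs.

Lemma nth_pre (y : cantor) k m : m < k -> nth m (map y (seq 0 k)) false = y m.
Proof.
  intro H. rewrite (nth_indep _ _ (y 0)) by (rewrite length_map, length_seq; auto).
  rewrite map_nth, seq_nth; auto.
Qed.

Lemma Kval_aux (G : group) (al : aut G) a u u' : inK al a ->
  length u <= length u' -> cat u zeros = cat u' zeros ->
  iter_aut al (length u') (a u') = iter_aut al (length u) (a u).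
Proof.
  intros Ha L E.
  assert (u' = u ++ repeat false (length u' - length u)).
  { apply (cat_inj_len _ _ zeros). rewrite length_app, repeat_length; lia.
    rewrite cat_zeros_pad; auto. }
  remember (length u' - length u) as d. clear Heqd. subst u'. rewrite length_app, repeat_length, iter_add, <- K_pad; auto.
Qed.

Lemma Kval_eq (G : group) (al : aut G) a u : inK al a ->
  Kval al a (cat u zeros) = iter_aut al (length u) (a u).
Proof.
  intro Ha. unfold Kval.
  match goal with |- epsilon ?i ?P = _ => assert (S : P (epsilon i P)) end.
  { apply epsilon_spec. exists (iter_aut al (length u) (a u)), u. auto. }
  destruct S as [u' [E1 E2]]. rewrite E2.
  destruct (Nat.le_ge_cases (length u) (length u')).
  apply Kval_aux; auto. symmetry. apply Kval_aux; auto.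
Qed.
Definition alinv (G : group) (al : aut G) (y : G) : G :=
  epsilon (inhabits (gone G)) (fun x => al x = y).
Lemma alinv_spec (G : group) (al : aut G) y : al (alinv G al y) = y.
Proof. unfold alinv. apply (@epsilon_spec G (inhabits (gone G)) (fun x => al x = y)). exact (amap_surj al y). Qed.

Theorem mainTheorem9 (G : group) (al : aut G) (g : Gelt G) :
  central al g <->
  (inG al g /\ (forall x : cantor, snd g x = x) /\
   exists z : G, @in_centre G z /\ fixed al z /\
     forall x : cantor, inQ2 x -> Kval al (fst g) x = z).
Proof.
  destruct g as [a v]. unfold central, inG. simpl. split.
  - intros [[Ha HvV] Hc].
    set (one := fun _ : word => gone G).
    assert (H1 : inK al one) by (intro u; unfold one; rewrite al1; reflexivity).
    assert (Hw : forall w, inV w ->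
      (forall u, gmul G (a u) (pi al v one u) = gmul G (gone G) (pi al w a u)) /\
      (forall x, v (w x) = w (v x))).
    { intros w Hw. specialize (Hc (one, w) (conj H1 Hw)). unfold Gmul in Hc; simpl in Hc.
      injection Hc as E1 E2. split; intro; [apply (equal_f E1) | apply (equal_f E2)]. }
    assert (Hone : forall u, pi al v one u = gone G).
    { intro u. destruct (Hw _ inV_id) as [E _]. specialize (E u).
      rewrite pi_id, gmul1 in E by auto. rewrite <- (gmul1r G (a u)) in E at 2.
      apply gcancel in E; exact E. }
    assert (Inv : forall w, inV w -> forall u, pi al w a u = a u).
    { intros w Hw' u. destruct (Hw _ Hw') as [E _]. specialize (E u).
      rewrite Hone, gmul1r, gmul1 in E. symmetry; exact E. }
    assert (Hv : forall x, v x = x).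
    { intro x. destruct (classic (v x = x)) as [|Hne]; auto. exfalso.
      destruct (not_all_ex_not _ (fun n => v x n = x n)) as [n Hn].
      { intro Hall. apply Hne, functional_extensionality, Hall. }
      set (q := map (v x) (seq 0 (S n))).
      assert (Lq : length q = S n) by (unfold q; rewrite length_map, length_seq; auto).
      assert (P1 : is_prefix q (v x)).
      { intros m Hm. rewrite Lq in Hm. unfold q. apply nth_pre; auto. }
      assert (P2 : ~ is_prefix q x).
      { intro Hp. apply Hn. rewrite <- (Hp n) by lia. unfold q. rewrite nth_pre; auto. }
      destruct (Hw _ (inV_wq q)) as [_ E]. specialize (E x).
      rewrite (wq_out q x P2) in E.
      apply (f_equal (fun f => f (length q))) in E. rewrite wq_in in E by auto.
      destruct (v x (length q)); discriminate. }
    assert (Ev : v = fun x => x) by (apply functional_extensionality; auto).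
    subst v.
    destruct (const_from_rel G al a Ha)
      as [Hconst Hfix].
    { intro u. rewrite <- (pi_x0 G al a Ha u). symmetry; apply Inv, inV_x0. }
    { intro u. rewrite <- (pi_sw G al a Ha u). symmetry; apply Inv. exact (inV_wq []). }
    { intro u. rewrite <- (pi_w0 G al a Ha u). symmetry; apply Inv. exact (inV_wq [false]). }
    set (z := a [false]) in *.
    split. split; auto. split; auto.
    exists z. split; [|split].
    + intro y.
      set (b := fun p : word => Nat.iter (length p) (alinv G al) y).
      assert (Hb : inK al b).
      { intro u. unfold b. rewrite length_app. simpl. rewrite Nat.add_comm. simpl.
        rewrite alinv_spec. reflexivity. }
      specialize (Hc (b, fun x => x) (conj Hb inV_id)). unfold Gmul in Hc; simpl in Hc.
      apply (f_equal fst) in Hc; simpl in Hc. apply (f_equal (fun f => f [])) in Hc. rename Hc into E1.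
      rewrite !pi_id in E1 by auto. rewrite !Hconst in E1. exact E1.
    + exact Hfix.
    + intros x [u ->]. rewrite Kval_eq by auto. rewrite Hconst. apply iter_fixed; auto.
  - intros [[Ha HvV] [Hv [z [Hzc [Hzf HKv]]]]].
    assert (Hc : forall u, a u = z).
    { intro u. specialize (HKv (cat u zeros) (ex_intro _ u eq_refl)).
      rewrite Kval_eq in HKv by auto. apply (iter_inj G al (length u)).
      rewrite HKv, iter_fixed; auto. }
    assert (Ea : a = fun _ => z) by (apply functional_extensionality; auto).
    assert (Ev : v = fun x => x) by (apply functional_extensionality; auto).
    subst a v. split. split; auto.
    intros [b w] [Hb Hw]. unfold Gmul; simpl. f_equal.
    apply functional_extensionality; intro u.
    rewrite pi_id, pi_const by auto. apply Hzc.
Qed.
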